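(* For any odd prime $p$ and any positive integer $r$, $$p^{3r}\sum_{k=0}^{(p^r-3)/2}\frac{16^k}{(2k+1)^3\binom{2k}{k}^2}\equiv p^{3}\sum_{k=0}^{(p-3)/2}\frac{16^k}{(2k+1)^3\binom{2k}{k}^2}\pmod{p^4}.$$
   Context: A congruence $a\equiv b\pmod{p^m}$ between rational numbers means that $(a-b)/p^m$ is a rational number whose denominator is not divisible by $p$. *)

(* Defs.v *)
From mathcomp Require Import all_boot all_order all_algebra.
Set Implicit Arguments. Unset Strict Implicit. Unset Printing Implicit Defensive.
Import Order.TTheory GRing.Theory Num.Theory.
Local Open Scope ring_scope.

(* a = b (mod p^m) for rationals: (a - b)/p^m has denominator not divisible by p.
   Note rat is stored in lowest terms with positive denominator (denq). *)
Definition rat_congr (p m : nat) (a b : rat) : Prop :=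
  ~~ (p %| `|denq ((a - b) / (p ^ m)%:R)|%N)%N.

Definition term (k : nat) : rat :=
  (16 ^ k)%:R / (((2 * k + 1) ^ 3)%:R * ('C(2 * k, k) ^ 2)%:R).

(* Sum over k = 0 .. (n-3)/2, i.e. k < (n-1)/2, for odd n >= 3. *)
Definition S (n : nat) : rat := \sum_(k < (n - 1) %/ 2) term k.

(* Main.v *)
Require Import Defs.
From mathcomp Require Import all_boot all_order all_algebra.
From mathcomp Require Import zify ring lra.
Import Order.TTheory GRing.Theory Num.Theory.

Set Implicit Arguments. Unset Strict Implicit. Unset Printing Implicit Defensive.

Section Val.
Variable p : nat.
Hypothesis pp : prime p.

Lemma logn_sum (m M : nat) : 0 < m -> m < p ^ M ->
  logn p m = \sum_(1 <= i < M) (p ^ i %| m).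
Proof.
move=> m0 mM.
have p1 := prime_gt1 pp.
have LM : logn p m < M.
  rewrite -(ltn_exp2l _ _ p1); apply: leq_ltn_trans mM.
  by apply: dvdn_leq => //; apply: pfactor_dvdnn.
rewrite (big_cat_nat (n := (logn p m).+1)) //=.
rewrite (@eq_big_nat _ _ _ 1 (logn p m).+1 _ (fun _ => 1)); last first.
  by move=> i /andP[i1 i2]; rewrite pfactor_dvdn // -ltnS i2.
rewrite [X in _ + X]big1_seq ?addn0; last first.
  move=> i; rewrite mem_index_iota => /andP[i1 i2].
  rewrite pfactor_dvdn //; case: leqP => //; lia.
by rewrite sum_nat_const_nat muln1 subn1.
Qed.

Lemma legendre (n M : nat) : n < p ^ M ->
  logn p n`! = \sum_(1 <= i < M) n %/ p ^ i.
Proof.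
elim: n => [|n IH] nM.
  by rewrite fact0 logn1 big1 // => i _; rewrite div0n.
rewrite factS lognM ?fact_gt0 // IH; last by lia.
rewrite (logn_sum (M := M)) // -big_split /=.
apply: eq_bigr => i _; rewrite divnS ?expn_gt0 ?prime_gt0 //.
Qed.

Lemma keyval (k R : nat) : (2 * k + 1) < p ^ R ->
  logn p (2 * k + 1) + logn p 'C(2 * k, k) <= R.-1.
Proof.
move=> hR.
have eF : (2 * k + 1)`! = (2 * k + 1) * ('C(2 * k, k) * (k`! * k`!)).
  have := @bin_fact (2 * k) k; rewrite (_ : 2 * k - k = k); last by lia.
  by move=> ->; [rewrite addn1 factS | lia].
have C0 : 0 < 'C(2 * k, k) by rewrite bin_gt0; lia.
have := legendre hR; rewrite eF !lognM ?muln_gt0 ?fact_gt0 ?C0 ?addn1 //.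
rewrite -addn1 (legendre (n := k) (M := R)); last by lia.
move=> e.
have : \sum_(1 <= i < R) (2 * k + 1) %/ p ^ i <=
       \sum_(1 <= i < R) (k %/ p ^ i + k %/ p ^ i + 1).
  apply: leq_sum => i _.
  have d0 : 0 < p ^ i by rewrite expn_gt0 prime_gt0.
  rewrite -ltnS ltn_divLR //.
  have := divn_eq k (p ^ i); have := ltn_pmod k d0; nia.
rewrite -e !big_split /= sum_nat_const_nat muln1; lia.
Qed.
End Val.

Local Open Scope ring_scope.

Section Pint.
Variable p : nat.
Hypothesis pp : prime p.

Definition pint (x : rat) := ~~ (p %| `|denq x|)%N.

Lemma pint_frac (a b : int) : ~~ (p %| `|b|)%N -> pint (a%:~R / b%:~R).
Proof.
move=> pb; have b0 : b != 0 by apply: contraNneq pb => ->; rewrite dvdn0.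
set x := a%:~R / b%:~R.
have e : numq x * b = a * denq x.
  apply: (@intr_inj rat); rewrite !rmorphM /= numqE /x.
  by field; rewrite intr_eq0.
apply: contra pb => pd.
have : (`|denq x| %| `|numq x| * `|b|)%N.
  by rewrite -abszM e abszM dvdn_mull.
rewrite Gauss_dvdr; last by rewrite coprime_sym coprime_num_den.
move=> h; exact: dvdn_trans pd h.
Qed.

Lemma pintE x : pint x -> exists a b : int, ~~ (p %| `|b|)%N /\ x = a%:~R / b%:~R.
Proof. move=> h; exists (numq x), (denq x); split => //; by rewrite divq_num_den. Qed.

Lemma pint_int (a : int) : pint a%:~R.
Proof.
rewrite -[a%:~R]divr1 -[1]/(1%:~R); apply: pint_frac; rewrite absz1 dvdn1.
by apply/eqP => e; move: pp; rewrite e.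
Qed.

Lemma pintD x y : pint x -> pint y -> pint (x + y).
Proof.
move=> /pintE [a [b [hb ->]]] /pintE [c [d [hd ->]]].
have b0 : b != 0 by apply: contraNneq hb => ->; rewrite dvdn0.
have d0 : d != 0 by apply: contraNneq hd => ->; rewrite dvdn0.
have -> : a%:~R / b%:~R + c%:~R / d%:~R = (a * d + c * b)%:~R / (b * d)%:~R :> rat.
  by rewrite !rmorphD !rmorphM /=; field; rewrite !intr_eq0 b0 d0.
by apply: pint_frac; rewrite abszM Euclid_dvdM // negb_or hb hd.
Qed.

Lemma pintM x y : pint x -> pint y -> pint (x * y).
Proof.
move=> /pintE [a [b [hb ->]]] /pintE [c [d [hd ->]]].
have b0 : b != 0 by apply: contraNneq hb => ->; rewrite dvdn0.
have d0 : d != 0 by apply: contraNneq hd => ->; rewrite dvdn0.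
have -> : a%:~R / b%:~R * (c%:~R / d%:~R) = (a * c)%:~R / (b * d)%:~R :> rat.
  by rewrite !rmorphM /=; field; rewrite !intr_eq0 b0 d0.
by apply: pint_frac; rewrite abszM Euclid_dvdM // negb_or hb hd.
Qed.

Lemma pintN x : pint x -> pint (- x).
Proof. by rewrite /pint denqN. Qed.

Lemma pintB x y : pint x -> pint y -> pint (x - y).
Proof. by move=> hx hy; apply: pintD => //; apply: pintN. Qed.

Lemma pint_sum (I : Type) (r : seq I) (P : pred I) (F : I -> rat) :
  (forall i, P i -> pint (F i)) -> pint (\sum_(i <- r | P i) F i).
Proof.
move=> h; apply: (big_ind pint) => //; first by rewrite -[0]/(0%:~R); apply: pint_int.
exact: pintD.
Qed.

Lemma pint_natfrac (a b : nat) : (0 < b)%N -> (p ^ logn p b %| a)%N ->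
  pint (a%:R / b%:R).
Proof.
move=> b0 hd.
have [m cm eb] := pfactor_coprime pp b0.
have [a' ea] := dvdnP hd.
move: ea eb; set l := logn p b => ea eb.
have -> : a%:R / b%:R = a'%:R / m%:R :> rat.
  have m0 : (0 < m)%N by move: b0; rewrite eb muln_gt0 => /andP[].
  rewrite ea eb !natrM; field.
  rewrite pnatr_eq0 -lt0n m0 /= pnatr_eq0 -lt0n.
  by rewrite expn_gt0 prime_gt0.
rewrite -[a'%:R]/((a' : int)%:~R) -[m%:R]/((m:int)%:~R).
apply: pint_frac => /=.
by rewrite -prime_coprime // coprime_sym.
Qed.

End Pint.

Section Fp.
Variable p : nat.
Hypothesis pp : prime p.
Local Notation F := 'F_p.

Lemma natF0 (n : nat) : (p %| n)%N -> (n%:R : F) = 0.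
Proof. by move=> h; rewrite -(Fp_nat_mod pp) (eqP h). Qed.

Lemma natF0' (n : nat) : (n%:R : F) = 0 -> (p %| n)%N.
Proof. by move=> h; have := val_Fp_nat pp n; rewrite h /dvdn => <-. Qed.

Lemma coef_bin (n i : nat) : (('X + 1 : {poly F}) ^+ n)`_i = ('C(n, i))%:R.
Proof.
elim: n i => [|n IH] i.
  by rewrite expr0 coef1 bin0n.
rewrite exprSr mulrDr mulr1 coefD coefMX.
case: i => [|i] /=; first by rewrite add0r IH !bin0.
by rewrite !IH binS natrD addrC.
Qed.

Lemma lucas_poly (a b c d : nat) : (b < p)%N -> (d < p)%N ->
  ((('X ^+ p + 1 : {poly F}) ^+ a * ('X + 1) ^+ b)`_(p * c + d)) = ('C(a, c) * 'C(b, d))%:R.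
Proof.
move=> bp dp; elim: a c => [|a IH] c.
  rewrite expr0 mul1r coef_bin.
  case: c => [|c]; first by rewrite muln0 add0n bin0 mul1n.
  rewrite bin0n /= mul0n bin_small //; nia.
rewrite exprSr mulrDr mulr1 mulrDl coefD -mulrA mulrCA coefXnM.
case: c => [|c].
  rewrite muln0 add0n dp /= add0r.
  by have := IH 0%N; rewrite muln0 add0n !bin0.
have -> : (p * c.+1 + d < p)%N = false by apply/negbTE; nia.
have -> : (p * c.+1 + d - p = p * c + d)%N by nia.
by rewrite !IH binS mulnDl natrD addrC.
Qed.

Lemma lucas (a b c d : nat) : (b < p)%N -> (d < p)%N ->
  ('C(p * a + b, p * c + d)%:R : F) = 'C(a, c)%:R * 'C(b, d)%:R.
Proof.
move=> bp dp; rewrite -natrM -lucas_poly // -coef_bin.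
have chp : p \in [pchar {poly F}] by rewrite pchar_poly pchar_Fp.
have := pFrobenius_autD_comm chp (commr1 'X).
rewrite !pFrobenius_autE expr1n => e.
by rewrite exprD exprM e.
Qed.

Lemma bin_pred (i : nat) : (i < p)%N -> ('C(p.-1, i)%:R : F) = (-1) ^+ i.
Proof.
elim: i => [|i IH] ip; first by rewrite bin0 expr0.
have p1 := prime_gt1 pp.
have e : 'C(p, i.+1) = ('C(p.-1, i.+1) + 'C(p.-1, i))%N.
  by rewrite -binS prednK // ltnW.
have : ('C(p, i.+1)%:R : F) = 0 by apply: natF0; apply: prime_dvd_bin.
rewrite e natrD IH; last by lia.
by move/eqP; rewrite addr_eq0 => /eqP ->; rewrite exprS mulN1r.
Qed.

Lemma fermatF (a : nat) : ((a ^ p)%:R : F) = a%:R.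
Proof. by rewrite -(Fp_nat_mod pp) fermat_little // (Fp_nat_mod pp). Qed.


Hypothesis podd : odd p.

Definition u (k : nat) : F := (16 ^ k)%:R / ('C(2 * k, k) ^ 2)%:R.

Lemma pdec : p = (2 * ((p - 1) %/ 2) + 1)%N.
Proof. have := odd_double_half p; rewrite podd; lia. Qed.

Lemma ustep (K : nat) : u (p * K + (p - 1) %/ 2) = u K.
Proof.
set h := ((p - 1) %/ 2)%N.
have ph : p = (2 * h + 1)%N by rewrite /h {1}pdec.
have p1 := prime_gt1 pp.
have e16 : ((16 ^ h)%:R : F) = 1.
  have f4 := fermatF 4.
  have n4 : (4%:R : F) != 0.
    apply/negP => /eqP /natF0' h4.
    have : (p %| 2 ^ 2)%N by [].
    rewrite (Euclid_dvdX _ _ pp) // dvdn_prime2 //.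
    by case/andP => /eqP e _; move: podd; rewrite e.
  have e : (16 ^ h = 4 ^ (p - 1))%N by rewrite ph (_ : (2 * h + 1 - 1 = 2 * h)%N) ?expnM //; lia.
  rewrite e; apply: (mulIf n4); rewrite mul1r -natrM -expnSr.
  by rewrite (_ : (p - 1).+1 = p)%N ?fermatF //; lia.
rewrite /u (_ : (2 * (p * K + h) = p * (2 * K) + p.-1)%N); last by lia.
rewrite (_ : p.-1 = (p - 1))%N; last by lia.
rewrite !natrX lucas; [|lia|lia].
rewrite (_ : (p - 1) = p.-1)%N; last by lia.
rewrite bin_pred; last by lia.
have f : ((16 : F) ^+ K) ^+ p = 16 ^+ K by have := fermatF (16 ^ K); rewrite !natrX.
rewrite natrX in e16.
rewrite exprD mulnC exprM f e16 mulr1 exprMn.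
have s : ((-1 : F) ^+ h) ^+ 2 = 1 by rewrite exprAC sqrrN !expr1n.
by rewrite s mulr1.
Qed.

Lemma uiter (R j : nat) : u (p ^ R * j + (p ^ R - 1) %/ 2) = u j.
Proof.
elim: R => [|R IH]; first by rewrite expn0 mul1n subnn div0n addn0.
rewrite -IH -[RHS]ustep; congr u.
have oR : odd (p ^ R)%N by rewrite oddX podd orbT.
have := odd_double_half (p ^ R)%N; rewrite oR.
set P := (p ^ R)%N; set t := P./2 => eP.
rewrite expnS -/P.
set h := ((p - 1) %/ 2)%N.
have ph : p = (2 * h + 1)%N by rewrite /h {1}pdec.
rewrite -eP ph.
have -> : ((2 * h + 1) * (1 + t.*2) - 1 = 2 * ((2 * h + 1) * t + h))%N by nia.
have -> : (1 + t.*2 - 1 = 2 * t)%N by lia.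
rewrite !mulKn //; nia.
Qed.

Lemma cross (k j : nat) : ~~ (p %| 'C(2 * k, k))%N -> ~~ (p %| 'C(2 * j, j))%N ->
  u k = u j ->
  ((16 ^ k * 'C(2 * j, j) ^ 2) %% p = (16 ^ j * 'C(2 * k, k) ^ 2) %% p)%N.
Proof.
move=> hk hj e.
have nk : ('C(2 * k, k) ^ 2)%:R != (0 : F).
  by apply/negP => /eqP /natF0'; rewrite Euclid_dvdX // (negbTE hk).
have nj : ('C(2 * j, j) ^ 2)%:R != (0 : F).
  by apply/negP => /eqP /natF0'; rewrite Euclid_dvdX // (negbTE hj).
rewrite -(val_Fp_nat pp) -(val_Fp_nat pp (16 ^ j * _)); congr val.
rewrite !natrM; move: e; rewrite /u => e.
have := congr1 (fun x => x * ('C(2 * k, k) ^ 2)%:R * ('C(2 * j, j) ^ 2)%:R) e.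
rewrite /= divfK // [in RHS]mulrAC divfK //.
by rewrite -!natrM; apply.
Qed.

End Fp.

Lemma pint_natfrac2 p (a b : nat) : prime p -> ~~ (p %| b)%N -> pint p (a%:R / b%:R).
Proof.
move=> pp hb; rewrite -[a%:R]/((a : int)%:~R) -[b%:R]/((b:int)%:~R).
by apply: pint_frac.
Qed.

Lemma ndvd_of_logn p x : prime p -> (0 < x)%N -> logn p x = 0%N -> ~~ (p %| x)%N.
Proof.
move=> pp x0 l0; apply/negP => h.
have : (p ^ 1 %| x)%N by rewrite expn1.
by rewrite pfactor_dvdn // l0.
Qed.

Unset Implicit Arguments.

Theorem lemma3p2 (p r : nat) : prime p -> odd p -> (0 < r)%N ->
  rat_congr p 4 ((p ^ (3 * r))%:R * S (p ^ r)) ((p ^ 3)%:R * S p).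
Proof.
move=> pp po r0.
change (pint p (((p ^ (3 * r))%:R * S (p ^ r) - (p ^ 3)%:R * S p) / (p ^ 4)%:R)).
case: r r0 => [//|s] _.
case: s => [|s].
  rewrite muln1 expn1 subrr mul0r -[0]/(0%:~R); exact: pint_int.
set r := s.+2.
set q := (p ^ s.+1)%N.
set J := ((p - 1) %/ 2)%N.
set hh := ((q - 1) %/ 2)%N.
set E := (3 * r - 4)%N.
have p0 : (0 < p)%N := prime_gt0 pp.
have pJ : p = (2 * J + 1)%N by rewrite /J {1}(pdec pp po).
have oq : odd q by rewrite oddX po orbT.
have qh : q = (2 * hh + 1)%N.
  have := odd_double_half q; rewrite oq /hh; lia.
have eK : ((p ^ r - 1) %/ 2 = q * J + hh)%N.
  rewrite /r expnS -/q.
  have -> : (p * q - 1 = 2 * (q * J + hh))%N by rewrite pJ qh; nia.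
  by rewrite mulKn.
have pE : (p ^ (3 * r) = p ^ E * p ^ 4)%N.
  by rewrite -expnD (_ : (E + 4 = 3 * r)%N) // /E /r; lia.
have pn0 : (p%:R : rat) != 0 by rewrite pnatr_eq0 -lt0n.
rewrite /S eK -/J.
set pe : rat := (p ^ E)%:R.
have -> : ((p ^ (3 * r))%:R * (\sum_(k < q * J + hh) term k) -
   (p ^ 3)%:R * (\sum_(k < J) term k)) / (p ^ 4)%:R =
   \sum_(k < q * J + hh) (pe * term k) - \sum_(k < J) (term k / p%:R).
  rewrite -mulr_sumr -mulr_suml pE !natrM !natrX /pe natrX; field.
  by [].
have q0 : (0 < q)%N by rewrite expn_gt0 p0.
have hhq : (hh < q)%N by lia.
have J0 : (0 < J)%N by have := prime_gt1 pp; lia.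
rewrite (bigID (fun k : 'I_(q * J + hh) => q %| (2 * k + 1))%N) /=.
have hlt : forall j : 'I_J, (q * j + hh < q * J + hh)%N.
  by move=> j; have := ltn_ord j; nia.
pose h := fun j : 'I_J => Ordinal (hlt j).
pose h' := fun i : 'I_(q * J + hh) => (insubd (Ordinal J0) (i %/ q)%N : 'I_J).
have hdiv : forall j : nat, ((q * j + hh) %/ q = j)%N.
  by move=> j; rewrite mulnC divnMDl // divn_small // addn0.
rewrite (reindex_onto h h'); last first.
  move=> i /dvdnP [m em]; apply: val_inj => /=.
  have ei := divn_eq i q.
  have ri := ltn_pmod i q0.
  set a := (i %/ q)%N in ei *; set b := (i %% q)%N in ei ri.
  have eb : (2 * b + 1 = q)%N.
    have : (q %| 2 * b + 1)%N.
      have : (q %| 2 * i + 1)%N by rewrite em dvdn_mull.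
      by rewrite ei mulnDr mulnA -addnA dvdn_addr // dvdn_mull.
    case/dvdnP => c; case: c => [|[|c]] ec; [lia | lia | move: ec; rewrite !mulSn; lia].
  have bh : b = hh by lia.
  have aJ : (a < J)%N.
    by have := ltn_ord i; rewrite ei bh ltn_add2r mulnC ltn_pmul2l.
  change (q * val (h' i) + hh = i)%N; rewrite /h' val_insubd aJ /= mulnC {2}ei bh.
  by [].

rewrite (eq_bigl (fun _ => true)); last first.
  move=> j; rewrite /h /h' /= hdiv.
  apply/andP; split; first by apply/dvdnP; exists (2 * j + 1)%N; nia.
  by apply/eqP/val_inj; rewrite /= val_insubd ltn_ord.
rewrite addrAC -sumrB /=.
apply: (pintD pp).
  apply: (pint_sum pp) => j _.
  set k := (q * j + hh)%N.
  set m := (2 * j + 1)%N.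
  have e2k : (2 * k + 1 = q * m)%N by rewrite /k /m qh; nia.
  have jp : (2 * j + 1 < p ^ 1)%N by rewrite expn1; have := ltn_ord j; lia.
  have kvj := keyval pp jp.
  have m0 : (0 < m)%N by rewrite /m addn1.
  have Cj0 : (0 < 'C(2 * j, j))%N by rewrite bin_gt0; lia.
  have Ck0 : (0 < 'C(2 * k, k))%N by rewrite bin_gt0; lia.
  have hm : ~~ (p %| m)%N by apply: ndvd_of_logn => //; move: kvj; rewrite /m; lia.
  have hj : ~~ (p %| 'C(2 * j, j))%N by apply: ndvd_of_logn => //; move: kvj; lia.
  have kr : (2 * k + 1 < p ^ r)%N.
    rewrite e2k /r (expnS p s.+1) -/q mulnC ltn_pmul2r //.
  have kvk := keyval pp kr.
  have hk : ~~ (p %| 'C(2 * k, k))%N.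
    apply: ndvd_of_logn => //; move: kvk.
    rewrite e2k lognM // /q pfactorK //.
    have : logn p m = 0%N by move: kvj; rewrite /m; lia.
    rewrite /r; lia.
  have ue : u p k = u p j by rewrite /k /q /hh uiter.
  have cr := cross pp hk hj ue.
  set U := (16 ^ k * (m ^ 3 * 'C(2 * j, j) ^ 2))%N.
  set V := (16 ^ j * (m ^ 3 * 'C(2 * k, k) ^ 2))%N.
  have eUV : (U %% p = V %% p)%N.
    by rewrite /U /V mulnCA [in RHS]mulnCA -modnMmr cr modnMmr.
  set D := ((m ^ 3 * 'C(2 * k, k) ^ 2) * (m ^ 3 * 'C(2 * j, j) ^ 2))%N.
  have hD : ~~ (p %| D)%N.
    by rewrite /D !Euclid_dvdM // (negbTE hm) (negbTE hk) (negbTE hj).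
  have eq3 : (q ^ 3 = p ^ E * p)%N.
    have e3 : (s.+1 * 3 = E + 1)%N by rewrite /E /r; clear -s; lia.
    by rewrite /q -expnM e3 expnD expn1.
  have -> : pe * term k - term j / p%:R = (U %/ p)%:R / D%:R - (V %/ p)%:R / D%:R.
    have dU := divn_eq U p; have dV := divn_eq V p.
    rewrite eUV in dU.
    have eU : ((U %/ p)%:R : rat) = (U%:R - (V %% p)%:R) / p%:R.
      by have := congr1 (fun n => n%:R : rat) dU; rewrite /= natrD natrM => ->; field.
    have eV : ((V %/ p)%:R : rat) = (V%:R - (V %% p)%:R) / p%:R.
      by have := congr1 (fun n => n%:R : rat) dV; rewrite /= natrD natrM => ->; field.
    rewrite eU eV /U /V /D /term e2k expnMn eq3 /pe !natrM.
    have nm : (m%:R : rat) != 0 by rewrite pnatr_eq0 -lt0n.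
    have nk : ('C(2 * k, k)%:R : rat) != 0 by rewrite pnatr_eq0 -lt0n.
    have nj : ('C(2 * j, j)%:R : rat) != 0 by rewrite pnatr_eq0 -lt0n.
    field.
    by rewrite nj nm nk pn0 /= pnatr_eq0 -lt0n expn_gt0 p0.

  by apply: (pintB pp); apply: pint_natfrac2.
apply: (pint_sum pp) => k hk.
have kr : (2 * k + 1 < p ^ r)%N.
  have := ltn_ord k; move: (nat_of_ord k) => kk; rewrite -eK.
  have : (0 < p ^ r)%N by rewrite expn_gt0 p0.
  lia.
have kv := keyval pp kr.
set e := logn p (2 * k + 1) in kv.
set c := logn p 'C(2 * k, k) in kv.
have es : (e <= s)%N.
  rewrite leqNgt; apply/negP => se.
  move/negP: hk; apply.
  apply: dvdn_trans (pfactor_dvdnn p (2 * k + 1)).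
  by rewrite /q dvdn_exp2l.
have C0 : (0 < 'C(2 * k, k))%N by rewrite bin_gt0; lia.
have -> : pe * term k = (p ^ E * 16 ^ k)%:R / (((2 * k + 1) ^ 3 * 'C(2 * k, k) ^ 2))%:R.
  by rewrite /term /pe (natrM _ (p ^ E)) (natrM _ ((2 * k + 1) ^ 3)) mulrA.
apply: (pint_natfrac pp); first by rewrite muln_gt0 !expn_gt0 C0 addn1.
apply: dvdn_mulr; rewrite dvdn_exp2l // lognM ?expn_gt0 ?C0 ?addn1 // !lognX.
have -> : logn p (2 * k).+1 = e by rewrite /e addn1.
move: kv; rewrite /r /E; lia.
Qed.
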